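(* Let $G$ be a group (finite or infinite), let $F$ be a field of characteristic zero, and let $\mathfrak{S}$ be a subring of $F[G]$. Then $\mathfrak{S}$ is a Schur ring over $G$ if and only if $\mathfrak{S}$ is closed under the Hadamard product $\circ$ and under the involution $*$, $1\in\mathfrak{S}$, and for every $g\in G$ there exists $\alpha\in\mathfrak{S}$ with $g\in\operatorname{supp}(\alpha)$.
   Context: Elements of $F[G]$ are $\alpha=\sum_{g\in G}\alpha_g g$ with finitely many nonzero $\alpha_g\in F$; $\operatorname{supp}(\alpha)=\{g\mid\alpha_g\neq0\}$; $\alpha\circ\beta=\sum_g\alpha_g\beta_g g$; $\alpha^*=\sum_g\alpha_g g^{-1}$. For finite $C\subseteq G$, $\overline{C}=\sum_{g\in C}g$ and $C^*=\{g^{-1}\mid g\in C\}$. A Schur module is an $F$-subspace $\mathfrak{S}=\operatorname{Span}_F\{\overline{C}\mid C\in\mathcal{P}\}$ for a partition $\mathcal{P}$ of $G$ into finite sets; this partition is denoted $\mathcal{D}(\mathfrak{S})$. A Schur ring over $G$ is a Schur module $\mathfrak{S}$ such that (i) $\{1\}\in\mathcal{D}(\mathfrak{S})$; (ii) $C\in\mathcal{D}(\mathfrak{S})$ implies $C^*\in\mathcal{D}(\mathfrak{S})$; (iii) for all $C,D\in\mathcal{D}(\mathfrak{S})$, $\overline{C}\cdot\overline{D}=\sum_{E\in\mathcal{D}(\mathfrak{S})}\lambda_{CDE}\overline{E}$ with only finitely many $\lambda_{CDE}\in F$ nonzero. *)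

(* Defs.v *)
From HB Require Import structures.
From mathcomp Require Import all_boot all_order all_algebra.
From mathcomp Require Import finmap.
Set Implicit Arguments. Unset Strict Implicit. Unset Printing Implicit Defensive.
Import GRing.Theory.
Local Open Scope fset_scope.
Local Open Scope ring_scope.

Section GroupRing.
Variables (G : groupType) (F : fieldType).

Definition FG := {fsfun G -> F with 0}.

Definition supp (a : FG) : {fset G} := finsupp a.

Definition FG0 : FG := [fsfun g in fset0 => (0 : F)].
Definition FGadd (a b : FG) : FG := [fsfun g in supp a `|` supp b => a g + b g].
Definition FGscale (c : F) (a : FG) : FG := [fsfun g in supp a => c * a g].
Definition FGmul (a b : FG) : FG :=
  [fsfun g in [fset (x * y)%g | x in supp a, y in supp b] =>
     \sum_(h <- supp a) a h * b (h^-1 * g)%g].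
Definition FG1 : FG := [fsfun g in [fset (1 : G)%g] => (1 : F)].
Definition hadamard (a b : FG) : FG := [fsfun g in supp a => a g * b g].
Definition FGstar (a : FG) : FG :=
  [fsfun g in [fset (h^-1)%g | h in supp a] => a (g^-1)%g].
Definition csum (C : {fset G}) : FG := [fsfun g in C => (1 : F)].
Definition finv (C : {fset G}) : {fset G} := [fset (c^-1)%g | c in C].

Definition lincomb (s : seq (F * {fset G})) : FG :=
  foldr (fun cC acc => FGadd (FGscale cC.1 (csum cC.2)) acc) FG0 s.

Definition is_fin_partition (P : {fset G} -> Prop) : Prop :=
  [/\ forall C, P C -> C != fset0,
      forall C D, P C -> P D -> C != D -> C `&` D = fset0
    & forall g, exists C, P C /\ g \in C].

Definition span_classes (P : {fset G} -> Prop) (a : FG) : Prop :=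
  exists s : seq (F * {fset G}), (forall cC, cC \in s -> P cC.2) /\ a = lincomb s.

Definition schur_module_of (S : FG -> Prop) (P : {fset G} -> Prop) : Prop :=
  is_fin_partition P /\ (forall a, S a <-> span_classes P a).

Definition is_schur_ring (S : FG -> Prop) : Prop :=
  exists P : {fset G} -> Prop,
    [/\ schur_module_of S P,
        P [fset (1 : G)%g],
        (forall C, P C -> P (finv C))
      & (forall C D, P C -> P D -> span_classes P (FGmul (csum C) (csum D)))].

(* subring of F[G] (F-subalgebra, not necessarily containing 1) *)
Definition is_subring (S : FG -> Prop) : Prop :=
  [/\ S FG0,
      (forall a b, S a -> S b -> S (FGadd a b)),
      (forall c a, S a -> S (FGscale c a))
    & (forall a b, S a -> S b -> S (FGmul a b))].

End GroupRing.

(* Main.v *)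
Require Import Defs.
From HB Require Import structures.
From mathcomp Require Import all_boot all_order all_algebra.
From mathcomp Require Import finmap.
From mathcomp Require Import ring.
From Stdlib Require Classical_Prop.
Set Implicit Arguments. Unset Strict Implicit. Unset Printing Implicit Defensive.
Import GRing.Theory.
Local Open Scope fset_scope.
Local Open Scope ring_scope.

Local Notation finv := Defs.finv.
Section Basics.
Variables (G : groupType) (F : fieldType).
Implicit Types (a b x y : FG G F) (C D : {fset G}).

Lemma suppE a g : (g \in supp a) = (a g != 0).
Proof. by rewrite /supp mem_finsupp. Qed.

Lemma notsupp a g : g \notin supp a -> a g = 0.
Proof. by rewrite suppE negbK => /eqP. Qed.

Lemma FG0E g : FG0 G F g = 0.
Proof. by rewrite /FG0 fsfunE; case: (g \in _). Qed.

Lemma FGaddE a b g : FGadd a b g = a g + b g.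
Proof.
rewrite /FGadd fsfunE inE; case: ifP => // /norP [ha hb].
by rewrite !notsupp // addr0.
Qed.

Lemma FGscaleE c a g : FGscale c a g = c * a g.
Proof.
rewrite /FGscale fsfunE; case: ifP => // /negbT h.
by rewrite notsupp // mulr0.
Qed.

Lemma hadamardE a b g : hadamard a b g = a g * b g.
Proof.
rewrite /hadamard fsfunE; case: ifP => // /negbT h.
by rewrite notsupp // mul0r.
Qed.

Lemma FGstarE a g : FGstar a g = a (g^-1)%g.
Proof.
rewrite /FGstar fsfunE; case: ifP => // /negbT h.
rewrite notsupp //; apply: contra h => h.
by apply/imfsetP; exists (g^-1)%g => //; rewrite invgK.
Qed.

Lemma csumE C g : csum F C g = (g \in C)%:R.
Proof. by rewrite /csum fsfunE; case: ifP. Qed.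

Lemma FG1E g : FG1 G F g = (g == 1%g)%:R.
Proof. by rewrite /FG1 fsfunE inE; case: ifP. Qed.


Lemma proper_of (A B : {fset G}) (x : G) : A `<=` B -> x \in B -> x \notin A -> A `<` B.
Proof.
move=> AB xB xA; rewrite fproperE AB /=; apply/negP => /fsubsetP h.
by move: (h x xB); rewrite (negbTE xA).
Qed.

Lemma mem_finv C g : (g \in finv C) = ((g^-1)%g \in C).
Proof. by rewrite -{1}(invgK g) /finv mem_imfset //; apply: invg_inj. Qed.

Lemma finvK C : finv (finv C) = C.
Proof. by apply/fsetP => g; rewrite !mem_finv invgK. Qed.

Lemma finv_sub C D : D `<=` finv C -> finv D `<=` C.
Proof.
move=> /fsubsetP h; apply/fsubsetP => g; rewrite mem_finv => /h.
by rewrite mem_finv invgK.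
Qed.

Lemma finv_eq0 D : finv D = fset0 -> D = fset0.
Proof.
move=> h; apply/fsetP => g; rewrite in_fset0; apply/negP => gD.
have : (g^-1)%g \in finv D by rewrite mem_finv invgK.
by rewrite h in_fset0.
Qed.

Lemma star_csum C : FGstar (csum F C) = csum F (finv C).
Proof. by apply/fsfunP => g; rewrite FGstarE !csumE mem_finv. Qed.

Lemma had_csum C D : hadamard (csum F C) (csum F D) = csum F (C `&` D).
Proof.
apply/fsfunP => g; rewrite hadamardE !csumE in_fsetI.
by case: (g \in C); case: (g \in D); rewrite /= ?mul1r ?mul0r.
Qed.

Lemma csumD C D : csum F (C `\` D) = FGadd (csum F C) (FGscale (-1) (csum F (C `&` D))).
Proof.
apply/fsfunP => g; rewrite FGaddE FGscaleE !csumE in_fsetI in_fsetD.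
by case: (g \in C); case: (g \in D); rewrite /= ?mulr1 ?mulr0 ?addr0 ?subrr.
Qed.

Lemma csum0 : csum F fset0 = FG0 G F.
Proof. by apply/fsfunP => g; rewrite csumE FG0E in_fset0. Qed.

Lemma csum1 : csum F [fset 1%g] = FG1 G F.
Proof. by apply/fsfunP => g; rewrite csumE in_fset1. Qed.

Definition pw a (vs : seq F) : FG G F :=
  foldr (fun v acc => FGadd (hadamard acc a) (FGscale (-v) acc)) a vs.

Lemma pwE a vs h : pw a vs h = a h * \prod_(v <- vs) (a h - v).
Proof.
elim: vs => [|v vs IH] /=; first by rewrite big_nil mulr1.
rewrite FGaddE hadamardE FGscaleE IH big_cons; ring.
Qed.

Definition level a c : {fset G} := [fset h in supp a | a h == c].

Lemma levelE a c h : (h \in level a c) = (h \in supp a) && (a h == c).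
Proof. by rewrite /level !inE. Qed.

Lemma level_interp a c : c != 0 ->
  let vs := [seq a h | h <- supp a & a h != c] in
  FGscale (c * \prod_(v <- vs) (c - v))^-1 (pw a vs) = csum F (level a c).
Proof.
move=> c0 vs; apply/fsfunP => h; rewrite FGscaleE pwE csumE levelE.
have k0 : c * \prod_(v <- vs) (c - v) != 0.
  rewrite mulf_neq0 // prodf_seq_neq0; apply/allP => v vin /=.
  rewrite subr_eq0 eq_sym; move: vin; rewrite /vs.
  by case/mapP => x; rewrite mem_filter => /andP [] hx _ ->.
case hs: (h \in supp a) => /=; last first.
  by rewrite notsupp ?hs // !mul0r mulr0.
case hc: (a h == c) => /=.
  by rewrite (eqP hc) mulVf.
have -> : \prod_(v <- vs) (a h - v) = 0.
  apply/eqP; rewrite prodf_seq_eq0; apply/hasP; exists (a h) => /=; last by rewrite subrr.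
  by rewrite /vs; apply/mapP; exists h => //; rewrite mem_filter hc hs.
by rewrite !mulr0.
Qed.


Lemma had_addl x y b : hadamard (FGadd x y) b = FGadd (hadamard x b) (hadamard y b).
Proof. by apply/fsfunP => g; rewrite !(hadamardE, FGaddE) mulrDl. Qed.
Lemma had_scalel c x b : hadamard (FGscale c x) b = FGscale c (hadamard x b).
Proof. by apply/fsfunP => g; rewrite !(hadamardE, FGscaleE) mulrA. Qed.
Lemma had0l b : hadamard (FG0 G F) b = FG0 G F.
Proof. by apply/fsfunP => g; rewrite !(hadamardE, FG0E) mul0r. Qed.
Lemma had_addr x y b : hadamard b (FGadd x y) = FGadd (hadamard b x) (hadamard b y).
Proof. by apply/fsfunP => g; rewrite !(hadamardE, FGaddE) mulrDr. Qed.
Lemma had_scaler c x b : hadamard b (FGscale c x) = FGscale c (hadamard b x).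
Proof. by apply/fsfunP => g; rewrite !(hadamardE, FGscaleE) mulrCA. Qed.
Lemma had0r b : hadamard b (FG0 G F) = FG0 G F.
Proof. by apply/fsfunP => g; rewrite !(hadamardE, FG0E) mulr0. Qed.
Lemma star_add x y : FGstar (FGadd x y) = FGadd (FGstar x) (FGstar y).
Proof. by apply/fsfunP => g; rewrite !(FGstarE, FGaddE). Qed.
Lemma star_scale c x : FGstar (FGscale c x) = FGscale c (FGstar x).
Proof. by apply/fsfunP => g; rewrite !(FGstarE, FGscaleE). Qed.
Lemma star0 : FGstar (FG0 G F) = FG0 G F.
Proof. by apply/fsfunP => g; rewrite !(FGstarE, FG0E). Qed.
Lemma lincomb1 C : lincomb [:: (1, C)] = csum F C.
Proof. by apply/fsfunP => g; rewrite /= FGaddE FGscaleE FG0E mul1r addr0. Qed.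
Lemma lincomb_cons c C s : lincomb ((c, C) :: s) = FGadd (FGscale c (csum F C)) (lincomb s).
Proof. by []. Qed.

Section Forward.
Variables (S : FG G F -> Prop) (hS : is_subring S) (P : {fset G} -> Prop)
  (hpart : is_fin_partition P) (hmod : forall a, S a <-> span_classes P a).

Lemma PS C : P C -> S (csum F C).
Proof. move=> PC; apply/hmod; exists [:: (1, C)]; split; last by rewrite lincomb1.
by move=> cC; rewrite inE => /eqP ->. Qed.

Lemma S_ind (f : FG G F -> FG G F) a :
  (forall x y, f (FGadd x y) = FGadd (f x) (f y)) ->
  (forall c x, f (FGscale c x) = FGscale c (f x)) ->
  f (FG0 G F) = FG0 G F ->
  (forall C, P C -> S (f (csum F C))) -> S a -> S (f a).
Proof.
case: hS => S0 Sadd Sscale _ fadd fscale f0 fC /hmod [s [hs ->]].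
elim: s hs => [|[c C] s IH] hs /=; first by rewrite f0.
rewrite fadd fscale; apply: Sadd; first by apply: Sscale; apply: fC; exact: (hs (c, C) (mem_head _ _)).
by apply: IH => cC cCin; apply: hs; rewrite inE cCin orbT.
Qed.


Lemma fwd_had a b : S a -> S b -> S (hadamard a b).
Proof.
move=> Sa Sb; apply: (S_ind (f := fun x => hadamard x b)) => //.
- by move=> x y; rewrite had_addl.
- by move=> c x; rewrite had_scalel.
- by rewrite had0l.
move=> C PC; apply: (S_ind (f := fun x => hadamard (csum F C) x)) => //.
- by move=> x y; rewrite had_addr.
- by move=> c x; rewrite had_scaler.
- by rewrite had0r.
move=> D PD; rewrite had_csum.
case: hpart => _ hdisj _.
have [->|neq] := eqVneq C D; first by rewrite fsetIid; apply: PS.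
by rewrite hdisj // csum0; case: hS.
Qed.

Lemma fwd_star (hinv : forall C, P C -> P (finv C)) a : S a -> S (FGstar a).
Proof.
apply: S_ind.
- exact: star_add.
- exact: star_scale.
- exact: star0.
by move=> C PC; rewrite star_csum; apply: PS; apply: hinv.
Qed.

End Forward.


Section Backward.
Variables (S : FG G F -> Prop) (hS : is_subring S)
  (hhad : forall a b, S a -> S b -> S (hadamard a b))
  (hstar : forall a, S a -> S (FGstar a)) (hone : S (FG1 G F)).

Definition Sset C := S (csum F C).
Definition Pc C := [/\ Sset C, C != fset0 &
  forall D, Sset D -> D `<=` C -> D = fset0 \/ D = C].

Lemma SsetI C D : Sset C -> Sset D -> Sset (C `&` D).
Proof. by move=> hC hD; rewrite /Sset -had_csum; apply: hhad. Qed.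

Lemma SsetD C D : Sset C -> Sset D -> Sset (C `\` D).
Proof.
move=> hC hD; rewrite /Sset csumD; case: hS => _ Sadd Sscale _.
by apply: Sadd => //; apply: Sscale; apply: SsetI.
Qed.

Lemma Spw a vs : S a -> S (pw a vs).
Proof.
case: hS => _ Sadd Sscale _ Sa; elim: vs => [|v vs IH] //=.
by apply: Sadd; [apply: hhad | apply: Sscale].
Qed.

Lemma Sset_level a c : S a -> c != 0 -> Sset (level a c).
Proof.
move=> Sa c0; rewrite /Sset -(level_interp a c0); case: hS => _ _ Sscale _.
by apply: Sscale; apply: Spw.
Qed.

Lemma exists_class n : forall C g, (#|` C| < n)%N -> Sset C -> g \in C ->
  exists M, Pc M /\ g \in M.
Proof.
elim: n => [//|n IH] C g hn SC gC.
case: (Classical_Prop.classic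
  (exists D, [/\ Sset D, D `<=` C, D <> fset0 & D <> C])); last first.
  move=> hno; exists C; split => //; split => //.
    by apply/negP => /eqP C0; move: gC; rewrite C0 in_fset0.
  move=> D SD DC; have [->|D0] := eqVneq D fset0; first by left.
  have [->|DC'] := eqVneq D C; first by right.
  by exfalso; apply: hno; exists D; split => //; [apply/eqP | apply/eqP].
case=> D [SD DC D0 DC'].
have DpC : D `<` C by rewrite fproperEneq DC andbT; apply/eqP.
have ltD := fproper_ltn_card DpC.
case gD : (g \in D).
  by apply: (IH D g) => //; apply: leq_trans ltD _.
case: (fset_0Vmem D) => [//|[x xD]].
have CDp : C `\` D `<` C.
  apply: (proper_of (x := x)); first exact: fsubsetDl.
    by move/fsubsetP: DC; apply.
  by rewrite in_fsetD xD.
apply: (IH (C `\` D) g); first by apply: leq_trans (fproper_ltn_card CDp) _.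
  exact: SsetD.
by rewrite in_fsetD gD gC.
Qed.

Lemma class_const M a g : Pc M -> S a -> g \in M -> g \in supp a ->
  M `<=` level a (a g).
Proof.
case=> SM _ hmin Sa gM ga.
have SI : Sset (M `&` level a (a g)).
  by apply: SsetI => //; apply: Sset_level => //; rewrite -suppE.
case: (hmin _ SI (fsubsetIl _ _)) => [h0|hM]; last by apply/fsetIidPl.
by move: (in_fset0 g); rewrite -h0 in_fsetI gM levelE ga eqxx.
Qed.

Lemma decomp n : forall a, (#|` supp a| < n)%N -> S a -> span_classes Pc a.
Proof.
elim: n => [//|n IH] a hn Sa.
case: (fset_0Vmem (supp a)) => [e|[g ga]].
  exists [::]; split => //; apply/fsfunP => h /=.
  by rewrite FG0E notsupp // e in_fset0.
have gL : g \in level a (a g) by rewrite levelE ga eqxx.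
have ag0 : a g != 0 by rewrite -suppE.
have [M [PM gM]] := exists_class (ltnSn _) (Sset_level Sa ag0) gL.
have ML := class_const PM Sa gM ga.
set a' := FGadd a (FGscale (- a g) (csum F M)).
have a'E h : a' h = a h - a g * (h \in M)%:R.
  by rewrite /a' FGaddE FGscaleE csumE mulNr.
have Sa' : S a'.
  by case: hS PM => _ Sadd Sscale _ [SM _ _]; apply: Sadd => //; apply: Sscale.
have sub : supp a' `<` supp a.
  apply: (proper_of (x := g)) => //; last first.
    by rewrite suppE a'E gM mulr1 subrr eqxx.
  apply/fsubsetP => h; rewrite suppE a'E.
  case hM : (h \in M); last by rewrite mulr0 subr0 suppE.
  by move=> _; move/fsubsetP: ML => /(_ h hM); rewrite levelE => /andP [].
have [s [hs es]] := IH a' (leq_trans (fproper_ltn_card sub) hn) Sa'.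
exists ((a g, M) :: s); split.
  by move=> cC; rewrite inE => /orP [/eqP -> //|]; apply: hs.
rewrite lincomb_cons -es; apply/fsfunP => h.
rewrite FGaddE FGscaleE a'E csumE; ring.
Qed.

Lemma span_S a : span_classes Pc a -> S a.
Proof.
case=> s [hs ->]; case: hS => S0 Sadd Sscale _.
elim: s hs => [|[c C] s IH] hs //=.
apply: Sadd; last by apply: IH => cC h; apply: hs; rewrite inE h orbT.
by apply: Sscale; case: (hs (c, C) (mem_head _ _)).
Qed.

Lemma bwd (hcov : forall g : G, exists a, S a /\ g \in supp a) : is_schur_ring S.
Proof.
exists Pc; split.
- split; last by move=> a; split; [move=> Sa; apply: (@decomp (#|` supp a|).+1) | apply: span_S].
  split.
  + by move=> C [].
  + move=> C D [SC _ hC] [SD _ hD] CD.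
    have SI := SsetI SC SD.
    case: (hC _ SI (fsubsetIl _ _)) => // eC.
    case: (hD _ SI (fsubsetIr _ _)) => // eD.
    by move: CD; rewrite -eC -{2}eD eqxx.
  + move=> g; have [a [Sa ga]] := hcov g.
    have gL : g \in level a (a g) by rewrite levelE ga eqxx.
    have ag0 : a g != 0 by rewrite -suppE.
    have [M [PM gM]] := exists_class (ltnSn _) (Sset_level Sa ag0) gL.
    by exists M.
- split; first by rewrite /Sset csum1.
    by apply/negP => /eqP/fsetP/(_ 1%g); rewrite in_fset1 in_fset0 eqxx.
  move=> D _; rewrite fsubset1 => /orP [] /eqP ->; by [right | left].
- move=> C [SC C0 hC]; split.
  + by rewrite /Sset -star_csum; apply: hstar.
  + case: (fset_0Vmem C) C0 => [->|[x xC] _]; first by rewrite eqxx.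
    apply/negP => /eqP /fsetP /(_ (x^-1)%g).
    by rewrite mem_finv invgK xC in_fset0.
  + move=> D SD DC.
    have SiD : Sset (finv D) by rewrite /Sset -star_csum; apply: hstar.
    case: (hC _ SiD (finv_sub DC)) => h.
      by left; apply: finv_eq0.
    by right; rewrite -h finvK.
- move=> C D [SC _ _] [SD _ _]; apply: (@decomp _.+1 _ (ltnSn _)).
  by case: hS => _ _ _ Smul; apply: Smul.
Qed.

End Backward.

End Basics.

Unset Implicit Arguments.
Set Strict Implicit.
Theorem corollary2p10 (G : groupType) (F : fieldType)
  (charF0 : [pchar F] =i pred0) (S : FG G F -> Prop) :
  is_subring S ->
  (is_schur_ring S <->
   [/\ (forall a b, S a -> S b -> S (hadamard a b)),
       (forall a, S a -> S (FGstar a)),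
       S (FG1 G F)
     & (forall g : G, exists a, S a /\ g \in supp a)]).
Proof.
move=> hS; split.
  case=> P [[hpart hmod] P1 hinv _]; split.
  - by move=> a b; apply: (fwd_had hS hpart hmod).
  - by apply: (fwd_star hS hmod).
  - by rewrite -csum1; apply: (PS hmod).
  move=> g; case: hpart => _ _ /(_ g) [C [PC gC]].
  exists (csum F C); split; first exact: (PS hmod).
  by rewrite suppE csumE gC oner_neq0.
by case=> h1 h2 h3 h4; apply: bwd.
Qed.
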